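(* Let $v,d\in\mathbb{C}$ with $v\neq0$, $d\neq0$, and let $HC_F(v,d)\subset\mathbb{C}P^4$ be the curve defined in coordinates $[z_0,z_1,z_2,z_3,x]$ by $z_2^2-z_0^2=z_3^2-z_1^2$, $x^2+z_2^2-z_0^2=0$, $v(z_0-z_1)x-dz_0z_1=0$. Let $\mathbf p_1,\dots,\mathbf p_4$ be the points $[-1,0,1,0,0]$, $[1,0,1,0,0]$, $[0,-1,0,1,0]$, $[0,1,0,1,0]$. Then: if $d^2\neq4v^2$, the only singular points of $HC_F(v,d)$ are $\mathbf p_1,\mathbf p_2,\mathbf p_3,\mathbf p_4$; if $d=2v$, $HC_F(v,d)$ has exactly five singular points $\mathbf p_1,\mathbf p_2,\mathbf p_3,\mathbf p_4,[1,-1,0,0,-1]$; if $d=-2v$, $HC_F(v,d)$ has exactly five singular points $\mathbf p_1,\mathbf p_2,\mathbf p_3,\mathbf p_4,[1,-1,0,0,1]$.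
   Context: This is the case of equal sensor velocities $\mathbf v_1=\mathbf v_2=(0,v)$ of the curve $\{(u-y_1)^2+y_2^2=r_1^2,\ (u+y_1)^2+y_2^2=r_2^2,\ L_2r_1-L_1r_2-dr_1r_2=0\}$ with $L_1=-vy_2$, $L_2=-vy_2$, written in coordinates $z_0=4r_1$, $z_1=4r_2$, $z_2=4(u-y_1)$, $z_3=-4(u+y_1)$, $x=-4y_2$. A singular point is a point where the $3\times5$ Jacobian matrix of the three defining polynomials has rank less than $3$. *)

(* Defs.v *)
From HB Require Import structures.
From mathcomp Require Import all_boot all_order all_algebra.
From mathcomp Require Import mpoly.
Set Implicit Arguments. Unset Strict Implicit. Unset Printing Implicit Defensive.
Import Order.TTheory GRing.Theory Num.Theory.
Local Open Scope ring_scope.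

(* Homogeneous coordinates [z0,z1,z2,z3,x] of CP^4 are indexed by 'I_5:
   index 0 = z0, 1 = z1, 2 = z2, 3 = z3, 4 = x. *)

Section HCF.
Variable C : numClosedFieldType.

Definition Xv (k : nat) : {mpoly C[5]} := 'X_(inord k).

Definition HCF_F1 : {mpoly C[5]} :=
  Xv 2 ^+ 2 - Xv 0 ^+ 2 - (Xv 3 ^+ 2 - Xv 1 ^+ 2).
Definition HCF_F2 : {mpoly C[5]} :=
  Xv 4 ^+ 2 + Xv 2 ^+ 2 - Xv 0 ^+ 2.
Definition HCF_F3 (v d : C) : {mpoly C[5]} :=
  v%:MP * (Xv 0 - Xv 1) * Xv 4 - d%:MP * Xv 0 * Xv 1.

Definition HCF_eqs (v d : C) (i : 'I_3) : {mpoly C[5]} :=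
  match val i with
  | 0 => HCF_F1
  | 1 => HCF_F2
  | _ => HCF_F3 v d
  end.

Definition evalpt (p : 'rV[C]_5) (f : {mpoly C[5]}) : C :=
  meval (fun j => p 0 j) f.

Definition HCF_jac (v d : C) (p : 'rV[C]_5) : 'M[C]_(3, 5) :=
  \matrix_(i < 3, j < 5) evalpt p (mderiv j (HCF_eqs v d i)).

Definition on_HCF (v d : C) (p : 'rV[C]_5) : Prop :=
  p != 0 /\ forall i : 'I_3, evalpt p (HCF_eqs v d i) = 0.

Definition HCF_singular (v d : C) (p : 'rV[C]_5) : Prop :=
  on_HCF v d p /\ (\rank (HCF_jac v d p) < 3)%N.

Definition proj_eq (p q : 'rV[C]_5) : Prop :=
  exists c : C, c != 0 /\ p = c *: q.

Definition pt5 (a b c e f : C) : 'rV[C]_5 :=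
  \row_(j < 5) nth 0 [:: a; b; c; e; f] j.

Definition pp1 : 'rV[C]_5 := pt5 (-1) 0 1 0 0.
Definition pp2 : 'rV[C]_5 := pt5 1 0 1 0 0.
Definition pp3 : 'rV[C]_5 := pt5 0 (-1) 0 1 0.
Definition pp4 : 'rV[C]_5 := pt5 0 1 0 1 0.

End HCF.

(* Main.v *)
Require Import Defs.
From HB Require Import structures.
From mathcomp Require Import all_boot all_order all_algebra.
From mathcomp Require Import mpoly.
From mathcomp Require Import ring.
Import Order.TTheory GRing.Theory Num.Theory.
Local Open Scope ring_scope.

Section S.
Variable C : numClosedFieldType.
Implicit Types (p : 'rV[C]_5).

Lemma evX p k : meval (fun j => p 0 j) (Xv C k) = p 0 (inord k).
Proof. by rewrite /Xv mevalXU. Qed.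

Lemma evdX p j k : meval (fun j => p 0 j) (mderiv j (Xv C k)) = (inord k == j)%:R.
Proof.
rewrite /Xv mderivX mnm1E mevalZ.
case: eqP => [->|_]; last by rewrite mul0r.
by rewrite -{1}[mnm1 j]add0m addmK mpolyX0 meval1 mulr1.
Qed.

Definition z p k := p 0 (inord k) : C.
Definition dl (j : 'I_5) k : C := (inord k == j)%:R.

Lemma ev_jac1 p j : evalpt p (mderiv j (HCF_F1 C)) =
  2 * z p 2 * dl j 2 - 2 * z p 0 * dl j 0 - (2 * z p 3 * dl j 3 - 2 * z p 1 * dl j 1).
Proof.
rewrite /evalpt /HCF_F1 !expr2 !mderivB !mderivM !mevalB !mevalD !mevalM !evX !evdX /z /dl.
ring.
Qed.
Lemma ev_jac2 p j : evalpt p (mderiv j (HCF_F2 C)) =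
  2 * z p 4 * dl j 4 + 2 * z p 2 * dl j 2 - 2 * z p 0 * dl j 0.
Proof.
rewrite /evalpt /HCF_F2 !expr2 !mderivB !mderivD !mderivM !mevalB !mevalD !mevalM !evX !evdX /z /dl.
ring.
Qed.
Lemma ev_jac3 p j v d : evalpt p (mderiv j (HCF_F3 v d)) =
  v * (dl j 0 - dl j 1) * z p 4 + v * (z p 0 - z p 1) * dl j 4
  - d * (dl j 0 * z p 1 + z p 0 * dl j 1).
Proof.
rewrite /evalpt /HCF_F3 !(mderivB, mderivM, mderivC, mul0r, add0r, mevalB, mevalD, mevalM, mevalC, evX, evdX) /z /dl.
ring.
Qed.
Lemma ev_F p v d : [/\ evalpt p (HCF_F1 C) = z p 2 ^+ 2 - z p 0 ^+ 2 - (z p 3 ^+ 2 - z p 1 ^+ 2),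
  evalpt p (HCF_F2 C) = z p 4 ^+ 2 + z p 2 ^+ 2 - z p 0 ^+ 2 &
  evalpt p (HCF_F3 v d) = v * (z p 0 - z p 1) * z p 4 - d * z p 0 * z p 1].
Proof.
by split; rewrite /evalpt /HCF_F1 /HCF_F2 /HCF_F3 ?expr2 !(mevalB, mevalD, mevalM, mevalC, evX).
Qed.

Lemma dlE (a b : nat) : (a < 5)%N -> (b < 5)%N -> dl (inord a) b = (b == a)%:R.
Proof. by move=> ha hb; rewrite /dl -val_eqE /= !inordK. Qed.
Lemma lc1 {e X k : C} : e = 0 -> X = k * e -> X = 0.
Proof. by move=> -> ->; rewrite mulr0. Qed.
Lemma lc2 {e1 e2 X k1 k2 : C} : e1 = 0 -> e2 = 0 -> X = k1 * e1 + k2 * e2 -> X = 0.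
Proof. by move=> -> -> ->; rewrite !mulr0 addr0. Qed.
Lemma lc3 {e1 e2 e3 X k1 k2 k3 : C} : e1 = 0 -> e2 = 0 -> e3 = 0 ->
  X = k1 * e1 + k2 * e2 + k3 * e3 -> X = 0.
Proof. by move=> -> -> -> ->; rewrite !mulr0 !addr0. Qed.
Lemma m0 {a b : C} : a != 0 -> a * b = 0 -> b = 0.
Proof. by move=> ha /eqP; rewrite mulf_eq0 (negbTE ha) => /eqP. Qed.
Lemma sq0 (a : C) : a ^+ 2 = 0 -> a = 0.
Proof. by move/eqP; rewrite expf_eq0 => /andP[_ /eqP]. Qed.
Lemma sqe (a b : C) : a ^+ 2 - b ^+ 2 = 0 -> a = b \/ a = - b.
Proof. by move/eqP; rewrite subr_eq0 eqf_sqr => /orP[/eqP|/eqP]; [left|right]. Qed.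
Lemma two0 : (2 : C) != 0. Proof. by rewrite pnatr_eq0. Qed.
Lemma nz2 {a : C} : a != 0 -> 2 * a != 0.
Proof. by move=> h; rewrite mulf_neq0 // two0. Qed.
Lemma nzm {a b : C} : a != 0 -> b != 0 -> a * b != 0.
Proof. by move=> ha hb; rewrite mulf_neq0. Qed.

Lemma core {v d z0 z1 z2 z3 x a b c : C} : v != 0 -> d != 0 ->
  ~ [/\ z0 = 0, z1 = 0, z2 = 0, z3 = 0 & x = 0] ->
  ~ [/\ a = 0, b = 0 & c = 0] ->
  z2 ^+ 2 - z0 ^+ 2 - (z3 ^+ 2 - z1 ^+ 2) = 0 ->
  x ^+ 2 + z2 ^+ 2 - z0 ^+ 2 = 0 ->
  v * (z0 - z1) * x - d * z0 * z1 = 0 ->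
  - (2 * (a + b) * z0) + c * (v * x - d * z1) = 0 ->
  2 * a * z1 - c * (v * x + d * z0) = 0 ->
  2 * (a + b) * z2 = 0 ->
  2 * a * z3 = 0 ->
  2 * b * x + c * v * (z0 - z1) = 0 ->
  [/\ z1 = 0, z3 = 0, x = 0 & z2 = - z0] \/
      [/\ z1 = 0, z3 = 0, x = 0 & z2 = z0] \/
      [/\ z0 = 0, z2 = 0, x = 0 & z3 = - z1] \/
      [/\ z0 = 0, z2 = 0, x = 0 & z3 = z1] \/
      [/\ d = 2 * v, z1 = - z0, z2 = 0, z3 = 0 & x = - z0] \/
      [/\ d = - (2 * v), z1 = - z0, z2 = 0, z3 = 0 & x = z0].
Proof.
move=> vn dn hnz habc F1 F2 F3 E0 E1 E2 E3 E4.
have [c0|cn] := eqVneq c 0.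
  subst c.
  have [a0|an] := eqVneq a 0.
    subst a.
    have bn : b != 0 by apply/eqP => b0; apply: habc; split.
    have x0 : x = 0.
      by apply: (m0 (nz2 bn)); apply: (lc1 (k := 1) E4); ring.
    have z2z : z2 = 0.
      by apply: (m0 (nz2 bn)); apply: (lc1 (k := 1) E2); ring.
    have z0z : z0 = 0.
      by apply: (m0 (nz2 bn)); apply: (lc1 (k := -1) E0); ring.
    subst x z2 z0.
    have : z3 ^+ 2 - z1 ^+ 2 = 0 by apply: (lc1 (k := -1) F1); ring.
    by case/sqe => ->; [do 3 right; left|do 2 right; left]; split; rewrite ?oppr0.
  have z3z : z3 = 0 by apply: (m0 (nz2 an)).
  have z1z : z1 = 0.
    by apply: (m0 (nz2 an)); apply: (lc1 (k := 1) E1); ring.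
  subst z3 z1.
  have x0 : x = 0.
    by apply: sq0; apply: (lc2 (k1 := 1) (k2 := -1) F2 F1); ring.
  subst x.
  have : z2 ^+ 2 - z0 ^+ 2 = 0 by apply: (lc1 (k := 1) F1); ring.
  by case/sqe => ->; [right; left|left]; split; rewrite ?oppr0.
have [a0|an] := eqVneq a 0.
  subst a.
  have E1' : v * x + d * z0 = 0.
    by apply: (m0 cn); apply: (lc1 (k := -1) E1); ring.
  have [b0|bn] := eqVneq b 0.
    subst b.
    have E0' : v * x - d * z1 = 0.
      by apply: (m0 cn); apply: (lc1 (k := 1) E0); ring.
    have zz : z0 - z1 = 0.
      by apply: (m0 (nzm cn vn)); apply: (lc1 (k := 1) E4); ring.
    have z1z : z1 = 0.
      apply: (m0 (nz2 dn)); apply: (lc3 (k1 := 1) (k2 := -1) (k3 := -d) E1' E0' zz); ring.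
    have z0z : z0 = 0 by move: zz; rewrite z1z subr0.
    subst z0 z1.
    have x0 : x = 0 by apply: (m0 vn); apply: (lc1 (k := 1) E1'); ring.
    subst x.
    have z2z : z2 = 0 by apply: sq0; apply: (lc1 (k := 1) F2); ring.
    subst z2.
    have z3z : z3 = 0 by apply: sq0; apply: (lc1 (k := -1) F1); ring.
    by case: hnz; split.
  have z2z : z2 = 0.
    by apply: (m0 (nz2 bn)); apply: (lc1 (k := 1) E2); ring.
  subst z2.
  have [z0z|z0n] := eqVneq z0 0.
    subst z0.
    have x0 : x = 0 by apply: sq0; apply: (lc1 (k := 1) F2); ring.
    subst x.
    have z1z : z1 = 0.
      by apply: (m0 (nzm cn dn)); apply: (lc1 (k := -1) E0); ring.
    subst z1.
    have z3z : z3 = 0 by apply: sq0; apply: (lc1 (k := -1) F1); ring.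
    by case: hnz; split.
  have : x ^+ 2 - z0 ^+ 2 = 0 by apply: (lc1 (k := 1) F2); ring.
  case/sqe => xe; subst x.
    have vd : d + v = 0.
      by apply: (m0 z0n); apply: (lc1 (k := 1) E1'); ring.
    have -> : d = - v by apply/eqP; rewrite -addr_eq0; apply/eqP.
    have : 2 * c * v * z0 = 0.
      by apply: (lc2 (k1 := 1) (k2 := 1) E0 E4); rewrite (_ : d = - v); [ring|apply/eqP; rewrite -addr_eq0; apply/eqP].
    by move/eqP; rewrite !mulf_eq0 (negbTE two0) (negbTE cn) (negbTE vn) (negbTE z0n).
  have vd : d - v = 0.
    by apply: (m0 z0n); apply: (lc1 (k := 1) E1'); ring.
  have dv : d = v by apply/eqP; rewrite -subr_eq0; apply/eqP.
  subst d.
  have : 2 * c * v * z0 = 0.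
    by apply: (lc2 (k1 := -1) (k2 := 1) E0 E4); ring.
  by move/eqP; rewrite !mulf_eq0 (negbTE two0) (negbTE cn) (negbTE vn) (negbTE z0n).
have z3z : z3 = 0 by apply: (m0 (nz2 an)).
subst z3.
have xz1 : x ^+ 2 - z1 ^+ 2 = 0 by apply: (lc2 (k1 := 1) (k2 := -1) F2 F1); ring.
have [ab0|abn] := eqVneq (a + b) 0.
  have b_ : b = - a by apply/eqP; rewrite -addr_eq0 addrC; apply/eqP.
  subst b.
  have E0' : v * x - d * z1 = 0.
    by apply: (m0 cn); apply: (lc1 (k := 1) E0); ring.
  have [z1z|z1n] := eqVneq z1 0.
    subst z1.
    have x0 : x = 0 by apply: sq0; apply: (lc1 (k := 1) xz1); ring.
    subst x.
    have z0z : z0 = 0 by apply: (m0 (nzm cn dn)); apply: (lc1 (k := -1) E1); ring.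
    subst z0.
    have z2z : z2 = 0 by apply: sq0; apply: (lc1 (k := 1) F2); ring.
    by case: hnz; split.
  case/sqe: xz1 => xe; subst x.
    have vd : v - d = 0 by apply: (m0 z1n); apply: (lc1 (k := 1) E0'); ring.
    have dv : d = v by apply/eqP; rewrite eq_sym -subr_eq0; apply/eqP.
    subst d.
    have : 2 * c * v * z1 = 0.
      by apply: (lc2 (k1 := -1) (k2 := -1) E1 E4); ring.
    by move/eqP; rewrite !mulf_eq0 (negbTE two0) (negbTE cn) (negbTE vn) (negbTE z1n).
  have vd : d + v = 0 by apply: (m0 z1n); apply: (lc1 (k := -1) E0'); ring.
  have dv : d = - v by apply/eqP; rewrite -addr_eq0; apply/eqP.
  subst d.
  have : 2 * c * v * z1 = 0.
    by apply: (lc2 (k1 := 1) (k2 := -1) E1 E4); ring.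
  by move/eqP; rewrite !mulf_eq0 (negbTE two0) (negbTE cn) (negbTE vn) (negbTE z1n).
have z2z : z2 = 0 by apply: (m0 (nz2 abn)).
subst z2.
have xz0 : x ^+ 2 - z0 ^+ 2 = 0 by apply: (lc1 (k := 1) F2); ring.
have [x0|xn] := eqVneq x 0.
  subst x.
  have z0z : z0 = 0 by apply: sq0; apply: (lc1 (k := -1) xz0); ring.
  have z1z : z1 = 0 by apply: sq0; apply: (lc1 (k := -1) xz1); ring.
  by case: hnz; split.
have xx : x * x != 0 by rewrite mulf_neq0.
case/sqe: xz0 => e0; case/sqe: xz1 => e1.
- have : d * (x * x) = 0.
    by apply: (lc1 (k := -1) F3); rewrite -e0 -e1; ring.
  by move/eqP; rewrite mulf_eq0 (negbTE dn) (negbTE xx).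
- have h0 : z0 = x by [].
  have h1 : z1 = - x by rewrite e1 opprK.
  have : (d + 2 * v) * (x * x) = 0.
    by apply: (lc1 (k := 1) F3); rewrite h0 h1; ring.
  rewrite mulrC; move/(m0 xx) => h.
  do 5 right; split => //; try by rewrite ?h0 ?h1 ?opprK.
  by apply/eqP; rewrite -addr_eq0; apply/eqP.
- have h0 : z0 = - x by rewrite e0 opprK.
  have h1 : z1 = x by [].
  have : (d - 2 * v) * (x * x) = 0.
    by apply: (lc1 (k := 1) F3); rewrite h0 h1; ring.
  rewrite mulrC; move/(m0 xx) => h.
  do 4 right; left; split => //; try by rewrite ?h0 ?h1 ?opprK.
  by apply/eqP; rewrite -subr_eq0; apply/eqP.
- have h0 : z0 = - x by rewrite e0 opprK.
  have h1 : z1 = - x by rewrite e1 opprK.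
  have : d * (x * x) = 0.
    by apply: (lc1 (k := -1) F3); rewrite h0 h1; ring.
  by move/eqP; rewrite mulf_eq0 (negbTE dn) (negbTE xx).
Qed.
Lemma ord3 (i : 'I_3) : i = inord 0 \/ i = inord 1 \/ i = inord 2.
Proof.
case: i => [[|[|[|i]]] hi] //; [left|right;left|right;right]; by apply: val_inj; rewrite /= inordK.
Qed.
Lemma ord5 (i : 'I_5) : i = inord 0 \/ i = inord 1 \/ i = inord 2 \/ i = inord 3 \/ i = inord 4.
Proof.
case: i => [[|[|[|[|[|i]]]]] hi] //; [left|right;left|do 2 right;left|do 3 right;left|do 4 right]; by apply: val_inj; rewrite /= inordK.
Qed.

Lemma row5E p : p = pt5 (z p 0) (z p 1) (z p 2) (z p 3) (z p 4).
Proof.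
apply/rowP => j; rewrite mxE; case: j => [[|[|[|[|[|j]]]]] hj] //=;
by rewrite /z; congr (p 0 _); by apply: val_inj; rewrite /= inordK.
Qed.
Lemma zpt5 a0 a1 a2 a3 a4 : [/\ z (pt5 a0 a1 a2 a3 a4) 0 = a0, z (pt5 a0 a1 a2 a3 a4) 1 = a1,
  z (pt5 a0 a1 a2 a3 a4) 2 = a2, z (pt5 a0 a1 a2 a3 a4) 3 = a3 & z (pt5 a0 a1 a2 a3 a4) 4 = a4].
Proof. by split; rewrite /z mxE inordK. Qed.
Lemma scale_pt5 (c a0 a1 a2 a3 a4 : C) : c *: pt5 a0 a1 a2 a3 a4 = pt5 (c * a0) (c * a1) (c * a2) (c * a3) (c * a4).
Proof. by apply/rowP => j; rewrite !mxE; case: j => [[|[|[|[|[|j]]]]] hj] //=; rewrite mulr0. Qed.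
Lemma pt5_0 : pt5 0 0 0 0 0 = 0 :> 'rV[C]_5.
Proof. by apply/rowP => j; rewrite !mxE; case: j => [[|[|[|[|[|j]]]]] hj]. Qed.

Lemma pnz p : p != 0 <-> ~ [/\ z p 0 = 0, z p 1 = 0, z p 2 = 0, z p 3 = 0 & z p 4 = 0].
Proof.
split.
  by move=> pn [h0 h1 h2 h3 h4]; move/eqP: pn; apply; rewrite (row5E p) h0 h1 h2 h3 h4 pt5_0.
by move=> hn; apply/eqP => p0; apply: hn; rewrite p0 /z !mxE.
Qed.

Lemma projE p a0 a1 a2 a3 a4 : proj_eq p (pt5 a0 a1 a2 a3 a4) <->
  exists c, c != 0 /\ [/\ z p 0 = c * a0, z p 1 = c * a1, z p 2 = c * a2, z p 3 = c * a3 & z p 4 = c * a4].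
Proof.
split.
  case=> c [cn ->]; exists c; split => //; rewrite scale_pt5; by case: (zpt5 (c * a0) (c * a1) (c * a2) (c * a3) (c * a4)).
case=> c [cn [h0 h1 h2 h3 h4]]; exists c; split => //.
by rewrite (row5E p) scale_pt5 h0 h1 h2 h3 h4.
Qed.

Lemma rank_lt3 (A : 'M[C]_(3,5)) : (\rank A < 3)%N <-> exists u : 'rV[C]_3, u != 0 /\ u *m A = 0.
Proof.
split.
  move=> h; have : kermx A != 0 by rewrite kermx_eq0 /row_free neq_ltn h.
  by case/rowV0Pn => u /sub_kermxP uA un; exists u.
case=> u [un uA].
have : ~~ row_free A.
  by rewrite -kermx_eq0; apply/rowV0Pn; exists u => //; apply/sub_kermxP.
by rewrite /row_free ltn_neqAle rank_leq_row andbT.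
Qed.

Lemma sum3 (f : 'I_3 -> C) : \sum_(i < 3) f i = f (inord 0) + f (inord 1) + f (inord 2).
Proof.
rewrite !big_ord_recr big_ord0 /= add0r.
by congr (_ + _ + _); congr f; by apply: val_inj; rewrite /= inordK.
Qed.

Lemma eqsE v d : [/\ HCF_eqs v d (inord 0) = HCF_F1 C, HCF_eqs v d (inord 1) = HCF_F2 C
   & HCF_eqs v d (inord 2) = HCF_F3 v d].
Proof. by split; rewrite /HCF_eqs /= inordK. Qed.

Lemma colE v d p (u : 'rV[C]_3) k : (k < 5)%N ->
  (u *m HCF_jac v d p) 0 (inord k) =
  u 0 (inord 0) * (2 * z p 2 * (2 == k)%:R - 2 * z p 0 * (0 == k)%:R - (2 * z p 3 * (3 == k)%:R - 2 * z p 1 * (1 == k)%:R))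
  + u 0 (inord 1) * (2 * z p 4 * (4 == k)%:R + 2 * z p 2 * (2 == k)%:R - 2 * z p 0 * (0 == k)%:R)
  + u 0 (inord 2) * (v * ((0 == k)%:R - (1 == k)%:R) * z p 4 + v * (z p 0 - z p 1) * (4 == k)%:R
  - d * ((0 == k)%:R * z p 1 + z p 0 * (1 == k)%:R)).
Proof.
move=> hk; rewrite mxE sum3 !mxE.
case: (eqsE v d) => -> -> ->.
by rewrite ev_jac1 ev_jac2 ev_jac3 !dlE.
Qed.


Lemma sing_to {v d : C} {p : 'rV[C]_5} : v != 0 -> d != 0 -> HCF_singular v d p ->
  [/\ z p 1 = 0, z p 3 = 0, z p 4 = 0 & z p 2 = - z p 0] \/
      [/\ z p 1 = 0, z p 3 = 0, z p 4 = 0 & z p 2 = z p 0] \/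
      [/\ z p 0 = 0, z p 2 = 0, z p 4 = 0 & z p 3 = - z p 1] \/
      [/\ z p 0 = 0, z p 2 = 0, z p 4 = 0 & z p 3 = z p 1] \/
      [/\ d = 2 * v, z p 1 = - z p 0, z p 2 = 0, z p 3 = 0 & z p 4 = - z p 0] \/
      [/\ d = - (2 * v), z p 1 = - z p 0, z p 2 = 0, z p 3 = 0 & z p 4 = z p 0].
Proof.
move=> vn dn [[pn hF] /rank_lt3 [u [un uA]]].
case: (eqsE v d) => e0 e1 e2; case: (ev_F p v d) => f1 f2 f3.
have F1 := hF (inord 0); rewrite e0 f1 in F1.
have F2 := hF (inord 1); rewrite e1 f2 in F2.
have F3 := hF (inord 2); rewrite e2 f3 in F3.
have col k : (k < 5)%N -> (u *m HCF_jac v d p) 0 (inord k) = 0 by rewrite uA mxE.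
have R0 := col 0%N isT; rewrite colE // in R0.
have R1 := col 1%N isT; rewrite colE // in R1.
have R2 := col 2%N isT; rewrite colE // in R2.
have R3 := col 3%N isT; rewrite colE // in R3.
have R4 := col 4%N isT; rewrite colE // in R4.
have habc : ~ [/\ u 0 (inord 0) = 0, u 0 (inord 1) = 0 & u 0 (inord 2) = 0].
  case=> h0 h1 h2; move/eqP: un; apply; apply/rowP => j; rewrite mxE.
  by case: (ord3 j) => [->|[->|->]].
apply: (core vn dn (proj1 (pnz p) pn) habc F1 F2 F3).
- by apply: (lc1 (k := 1) R0); rewrite /=; ring.
- by apply: (lc1 (k := 1) R1); rewrite /=; ring.
- by apply: (lc1 (k := 1) R2); rewrite /=; ring.
- by apply: (lc1 (k := -1) R3); rewrite /=; ring.
- by apply: (lc1 (k := 1) R4); rewrite /=; ring.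
Qed.

Lemma to_sing {v d : C} {p : 'rV[C]_5} {a b c : C} :
  ~ [/\ z p 0 = 0, z p 1 = 0, z p 2 = 0, z p 3 = 0 & z p 4 = 0] ->
  ~ [/\ a = 0, b = 0 & c = 0] ->
  z p 2 ^+ 2 - z p 0 ^+ 2 - (z p 3 ^+ 2 - z p 1 ^+ 2) = 0 ->
  z p 4 ^+ 2 + z p 2 ^+ 2 - z p 0 ^+ 2 = 0 ->
  v * (z p 0 - z p 1) * z p 4 - d * z p 0 * z p 1 = 0 ->
  - (2 * (a + b) * z p 0) + c * (v * z p 4 - d * z p 1) = 0 ->
  2 * a * z p 1 - c * (v * z p 4 + d * z p 0) = 0 ->
  2 * (a + b) * z p 2 = 0 ->
  2 * a * z p 3 = 0 ->
  2 * b * z p 4 + c * v * (z p 0 - z p 1) = 0 ->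
  HCF_singular v d p.
Proof.
move=> hnz habc F1 F2 F3 E0 E1 E2 E3 E4.
case: (eqsE v d) => e0 e1 e2; case: (ev_F p v d) => f1 f2 f3.
split.
  split; first by apply/pnz.
  by move=> i; case: (ord3 i) => [->|[->|->]]; rewrite ?e0 ?e1 ?e2 ?f1 ?f2 ?f3.
apply/rank_lt3; exists (\row_(i < 3) nth 0 [:: a; b; c] i); split.
  apply/eqP => u0; apply: habc.
  have h i : (i < 3)%N -> (\row_(i < 3) nth 0 [:: a; b; c] i) 0 (inord i) = 0 by rewrite u0 mxE.
  have := h 0%N isT; have := h 1%N isT; have := h 2%N isT.
  by rewrite !mxE !inordK.
apply/rowP => j; rewrite [RHS]mxE.
have ea : (\row_(i < 3) nth 0 [:: a; b; c] i) 0 (inord 0) = a by rewrite mxE inordK.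
have eb : (\row_(i < 3) nth 0 [:: a; b; c] i) 0 (inord 1) = b by rewrite mxE inordK.
have ec : (\row_(i < 3) nth 0 [:: a; b; c] i) 0 (inord 2) = c by rewrite mxE inordK.
case: (ord5 j) => [->|[->|[->|[->|->]]]]; rewrite colE // ea eb ec /=.
- by apply: (lc1 (k := 1) E0); ring.
- by apply: (lc1 (k := 1) E1); ring.
- by apply: (lc1 (k := 1) E2); ring.
- by apply: (lc1 (k := -1) E3); ring.
- by apply: (lc1 (k := 1) E4); ring.
Qed.


Lemma nzk {k a : C} : k != 0 -> a != 0 -> k * a = 0 -> False.
Proof. by move=> kn an /eqP; rewrite mulf_eq0 (negbTE kn) (negbTE an). Qed.
Lemma m1n : (-1 : C) != 0. Proof. by rewrite oppr_eq0 oner_eq0. Qed.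
Lemma o1n : (1 : C) != 0. Proof. by rewrite oner_eq0. Qed.

Lemma pt1_sing v d p : proj_eq p (pp1 C) -> HCF_singular v d p.
Proof.
rewrite /pp1 projE => -[k [kn [h0 h1 h2 h3 h4]]].
apply: (to_sing (a := 1) (b := -1) (c := 0)); rewrite ?h0 ?h1 ?h2 ?h3 ?h4; try ring.
- by case=> H _ _ _ _; apply: (nzk kn m1n).
- by case=> /eqP; rewrite oner_eq0.
Qed.
Lemma pt2_sing v d p : proj_eq p (pp2 C) -> HCF_singular v d p.
Proof.
rewrite /pp2 projE => -[k [kn [h0 h1 h2 h3 h4]]].
apply: (to_sing (a := 1) (b := -1) (c := 0)); rewrite ?h0 ?h1 ?h2 ?h3 ?h4; try ring.
- by case=> H _ _ _ _; apply: (nzk kn o1n).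
- by case=> /eqP; rewrite oner_eq0.
Qed.
Lemma pt3_sing v d p : proj_eq p (pp3 C) -> HCF_singular v d p.
Proof.
rewrite /pp3 projE => -[k [kn [h0 h1 h2 h3 h4]]].
apply: (to_sing (a := 0) (b := 1) (c := 0)); rewrite ?h0 ?h1 ?h2 ?h3 ?h4; try ring.
- by case=> _ H _ _ _; apply: (nzk kn m1n).
- by case=> _ /eqP; rewrite oner_eq0.
Qed.
Lemma pt4_sing v d p : proj_eq p (pp4 C) -> HCF_singular v d p.
Proof.
rewrite /pp4 projE => -[k [kn [h0 h1 h2 h3 h4]]].
apply: (to_sing (a := 0) (b := 1) (c := 0)); rewrite ?h0 ?h1 ?h2 ?h3 ?h4; try ring.
- by case=> _ H _ _ _; apply: (nzk kn o1n).
- by case=> _ /eqP; rewrite oner_eq0.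
Qed.
Lemma pt5_sing v d p : d = 2 * v -> proj_eq p (pt5 1 (-1) 0 0 (-1)) -> HCF_singular v d p.
Proof.
move=> ->; rewrite projE => -[k [kn [h0 h1 h2 h3 h4]]].
apply: (to_sing (a := - v) (b := 2 * v) (c := 2)); rewrite ?h0 ?h1 ?h2 ?h3 ?h4; try ring.
- by case=> H _ _ _ _; apply: (nzk kn o1n).
- by case=> _ _ /eqP; rewrite (negbTE two0).
Qed.
Lemma pt6_sing v d p : d = - (2 * v) -> proj_eq p (pt5 1 (-1) 0 0 1) -> HCF_singular v d p.
Proof.
move=> ->; rewrite projE => -[k [kn [h0 h1 h2 h3 h4]]].
apply: (to_sing (a := v) (b := - (2 * v)) (c := 2)); rewrite ?h0 ?h1 ?h2 ?h3 ?h4; try ring.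
- by case=> H _ _ _ _; apply: (nzk kn o1n).
- by case=> _ _ /eqP; rewrite (negbTE two0).
Qed.

Lemma sing_cases {v d : C} {p : 'rV[C]_5} : v != 0 -> d != 0 -> HCF_singular v d p ->
  proj_eq p (pp1 C) \/ proj_eq p (pp2 C) \/ proj_eq p (pp3 C) \/ proj_eq p (pp4 C) \/
  (d = 2 * v /\ proj_eq p (pt5 1 (-1) 0 0 (-1))) \/
  (d = - (2 * v) /\ proj_eq p (pt5 1 (-1) 0 0 1)).
Proof.
move=> vn dn hs.
have hnz : ~ [/\ z p 0 = 0, z p 1 = 0, z p 2 = 0, z p 3 = 0 & z p 4 = 0].
  by case: hs => -[pn _] _; apply/pnz.
case: (sing_to vn dn hs) => [[h1 h3 h4 h2]|[[h1 h3 h4 h2]|[[h0 h2 h4 h3]|[[h0 h2 h4 h3]|[[hd h1 h2 h3 h4]|[hd h1 h2 h3 h4]]]]]].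
- left; rewrite /pp1 projE; exists (- z p 0); split.
    by apply/eqP => /eqP; rewrite ?oppr_eq0 => /eqP e; apply: hnz; split; rewrite ?h1 ?h2 ?h3 ?h4 ?e ?oppr0.
  by split; rewrite ?h1 ?h2 ?h3 ?h4; ring.
- right; left; rewrite /pp2 projE; exists (z p 0); split.
    by apply/eqP => /eqP; rewrite ?oppr_eq0 => /eqP e; apply: hnz; split; rewrite ?h1 ?h2 ?h3 ?h4 ?e ?oppr0.
  by split; rewrite ?h1 ?h2 ?h3 ?h4; ring.
- do 2 right; left; rewrite /pp3 projE; exists (- z p 1); split.
    by apply/eqP => /eqP; rewrite ?oppr_eq0 => /eqP e; apply: hnz; split; rewrite ?h0 ?h2 ?h3 ?h4 ?e ?oppr0.
  by split; rewrite ?h0 ?h2 ?h3 ?h4; ring.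
- do 3 right; left; rewrite /pp4 projE; exists (z p 1); split.
    by apply/eqP => /eqP; rewrite ?oppr_eq0 => /eqP e; apply: hnz; split; rewrite ?h0 ?h2 ?h3 ?h4 ?e ?oppr0.
  by split; rewrite ?h0 ?h2 ?h3 ?h4; ring.
- do 4 right; left; split => //; rewrite projE; exists (z p 0); split.
    by apply/eqP => /eqP; rewrite ?oppr_eq0 => /eqP e; apply: hnz; split; rewrite ?h1 ?h2 ?h3 ?h4 ?e ?oppr0.
  by split; rewrite ?h1 ?h2 ?h3 ?h4; ring.
- do 5 right; split => //; rewrite projE; exists (z p 0); split.
    by apply/eqP => /eqP; rewrite ?oppr_eq0 => /eqP e; apply: hnz; split; rewrite ?h1 ?h2 ?h3 ?h4 ?e ?oppr0.
  by split; rewrite ?h1 ?h2 ?h3 ?h4; ring.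
Qed.
End S.

Theorem lemma7p1 (C : numClosedFieldType) (v d : C) :
  v != 0 -> d != 0 ->
  [/\ (d ^+ 2 != 4 * v ^+ 2 ->
        forall p : 'rV[C]_5, HCF_singular v d p <->
          (proj_eq p (pp1 C) \/ proj_eq p (pp2 C) \/ proj_eq p (pp3 C)
           \/ proj_eq p (pp4 C))),
      (d = 2 * v ->
        forall p : 'rV[C]_5, HCF_singular v d p <->
          (proj_eq p (pp1 C) \/ proj_eq p (pp2 C) \/ proj_eq p (pp3 C)
           \/ proj_eq p (pp4 C) \/ proj_eq p (pt5 1 (-1) 0 0 (-1))))
    & (d = - (2 * v) ->
        forall p : 'rV[C]_5, HCF_singular v d p <->
          (proj_eq p (pp1 C) \/ proj_eq p (pp2 C) \/ proj_eq p (pp3 C)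
           \/ proj_eq p (pp4 C) \/ proj_eq p (pt5 1 (-1) 0 0 1)))].
Proof.
move=> vn dn.
have v4 : (4 : C) * v != 0.
  by rewrite mulf_neq0 // pnatr_eq0.
split.
- move=> hd p; split.
    case/(sing_cases C vn dn) => [h|[h|[h|[h|[[e _]|[e _]]]]]]; try tauto.
      by case/negP: hd; rewrite e; apply/eqP; ring.
    by case/negP: hd; rewrite e; apply/eqP; ring.
  case=> [h|[h|[h|h]]].
  + exact: pt1_sing. + exact: pt2_sing. + exact: pt3_sing. + exact: pt4_sing.
- move=> hd p; split.
    case/(sing_cases C vn dn) => [h|[h|[h|[h|[[e h]|[e _]]]]]]; try tauto.
    have : (4 : C) * v = 0 by apply: (@lc2 C _ _ _ (-1) 1 (_ : d - 2 * v = 0) (_ : d + 2 * v = 0)); [rewrite hd subrr|rewrite e addrC subrr|ring].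
    by move/eqP; rewrite (negbTE v4).
  case=> [h|[h|[h|[h|h]]]].
  + exact: pt1_sing. + exact: pt2_sing. + exact: pt3_sing. + exact: pt4_sing.
  + exact: pt5_sing.
- move=> hd p; split.
    case/(sing_cases C vn dn) => [h|[h|[h|[h|[[e h]|[e h]]]]]]; try tauto.
    have : (4 : C) * v = 0 by apply: (@lc2 C _ _ _ (-1) 1 (_ : d - 2 * v = 0) (_ : d + 2 * v = 0)); [rewrite e subrr|rewrite hd addrC subrr|ring].
    by move/eqP; rewrite (negbTE v4).
  case=> [h|[h|[h|[h|h]]]].
  + exact: pt1_sing. + exact: pt2_sing. + exact: pt3_sing. + exact: pt4_sing.
  + exact: pt6_sing.
Qed.
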